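(* Let $n\geq 1$ and let $X_n$ and $S_1,\dots,S_n$ be as described in the context. If $A$ is a dense subset of $X_n$, then there exists $i\in\{1,\dots,n\}$ such that $A\cap S_i$ is non-empty and open in the subspace $S_i$.
   Context: Let $\mathcal{U}$ be a non-principal ultrafilter on $\omega$, and let $E$ be the space with underlying set $\omega$ whose open sets are the members of $\mathcal{U}$ together with $\emptyset$. For $n\ge 1$, let $X_n$ be the space with underlying set $\omega\times\{1,\dots,n\}$ whose open sets are $\emptyset$ together with all sets of the form $\bigcup_{i=1}^n (O_i\times\{i\})$ where each $O_i$ is a non-empty open subset of $E$. Let $S_i=\omega\times\{i\}$ with the subspace topology from $X_n$. *)

(* Defs.v *)
From mathcomp Require Import all_boot.
From mathcomp Require Import boolp classical_sets.
Set Implicit Arguments. Unset Strict Implicit. Unset Printing Implicit Defensive.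
Local Open Scope classical_set_scope.

Definition is_ultrafilter (U : set (set nat)) : Prop :=
  [/\ ~ U set0,
      U setT,
      (forall A B : set nat, U A -> A `<=` B -> U B),
      (forall A B : set nat, U A -> U B -> U (A `&` B)) &
      (forall A : set nat, U A \/ U (~` A))].

Definition non_principal (U : set (set nat)) : Prop :=
  ~ exists a : nat, U = [set A | A a].

Definition E_open (U : set (set nat)) (O : set nat) : Prop := U O \/ O = set0.

(* The space X_n, with underlying set omega x {1,...,n}; the index
   i : 'I_n stands for the coordinate i+1. *)
Definition Xn_open (U : set (set nat)) (n : nat) (W : set (nat * 'I_n)) : Prop :=
  W = set0 \/
  exists O : 'I_n -> set nat,
    (forall i, E_open U (O i) /\ O i !=set0) /\
    W = [set p | O p.2 p.1].

Definition S_ (n : nat) (i : 'I_n) : set (nat * 'I_n) := [set p | p.2 = i].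

Definition Xn_dense (U : set (set nat)) (n : nat) (A : set (nat * 'I_n)) : Prop :=
  forall W, Xn_open U W -> W !=set0 -> (A `&` W) !=set0.

Definition open_in_S (U : set (set nat)) (n : nat) (i : 'I_n)
  (V : set (nat * 'I_n)) : Prop :=
  V `<=` S_ i /\ exists W, Xn_open U W /\ V = W `&` S_ i.

(* Main.v *)
Require Import Defs.
From mathcomp Require Import all_boot.
From mathcomp Require Import boolp classical_sets.
Local Open Scope classical_set_scope.

Lemma U_ne (U : set (set nat)) (hU : is_ultrafilter U) (X : set nat) :
  U X -> X !=set0.
Proof.
case: hU => h0 _ _ _ _ UX.
case: (pselect (X !=set0)) => // H; exfalso; apply: h0.
suff <- : X = set0 by [].
apply/seteqP; split=> x // Hx; exfalso; apply: H; by exists x.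
Qed.

Theorem lemma6 (U : set (set nat)) (hU : is_ultrafilter U) (hnp : non_principal U)
  (n : nat) (hn : (1 <= n)%N) (A : set (nat * 'I_n)) :
  Xn_dense U A ->
  exists i : 'I_n, (A `&` S_ i) !=set0 /\ open_in_S U i (A `&` S_ i).
Proof.
move=> hd.
have hU' := hU; case: hU' => h0 hT hup hI hsp.
set Ai := fun i : 'I_n => [set k | A (k, i)].
case: (pselect (exists i, U (Ai i))) => [[i Hi]|H].
  have [k Hk] := @U_ne U hU _ Hi.
  exists i; split.
    by exists (k, i); split.
  split; first by move=> p [].
  exists [set p | (fun j : 'I_n => if j == i then Ai i else setT) p.2 p.1].
  split.
    right; exists (fun j : 'I_n => if j == i then Ai i else setT); split => //.
    move=> j; case: eqP => _; split.
    - by left.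
    - by exists k.
    - by left.
    - by exists 0.
  apply/seteqP; split.
    move=> [x j] [Ax Sj]; rewrite /S_ /= in Sj; subst j; split => //=.
    by rewrite eqxx.
  move=> [x j] [/= Hx Sj]; rewrite /S_ /= in Sj; subst j; split => //.
  by move: Hx; rewrite eqxx.
exfalso.
have HC : forall i, U (~` Ai i).
  move=> i; case: (hsp (Ai i)) => // Hi; exfalso; apply: H; by exists i.
pose i0 : 'I_n := Ordinal hn.
have [k Hk] := @U_ne U hU _ (HC i0).
have [[x j] [Ax Wx]] : (A `&` [set p | (~` Ai p.2) p.1]) !=set0.
  apply: hd.
    right; exists (fun j => ~` Ai j); split => //.
    by move=> j; split; [left; apply: HC | apply: (@U_ne U hU); apply: HC].
  by exists (k, i0).
by apply: Wx.
Qed.
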